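(* Let $w\ge 4$ and $u=w-2$. Then $$\sum_{\substack{a+b=w-1\\ a\ge 2,\ b\ge1}} T(a,b,1)=2T(u,2)+4\Big(\zeta(u,\bar1,\bar1)+\zeta(\bar u,1,1)-\zeta(\bar u,1,\bar1)-\zeta(u,\bar1,1)\Big).$$
   Context: Multiple $T$-values: for positive integers $s_1,\dots,s_d$ with $s_1>1$, $T(s_1,\dots,s_d)=\sum_{m_1>\dots>m_d>0,\ m_j\equiv d-j+1\ (\mathrm{mod}\ 2)}\frac{2^d}{m_1^{s_1}\cdots m_d^{s_d}}$. Euler sums: $\zeta(s_1,\dots,s_d;z_1,\dots,z_d)=\sum_{n_1>\dots>n_d>0}\frac{z_1^{n_1}\cdots z_d^{n_d}}{n_1^{s_1}\cdots n_d^{s_d}}$, $z_j\in\{\pm1\}$, convergent iff $(s_1,z_1)\ne(1,1)$; a bar over the $j$-th argument means $z_j=-1$, no bar means $z_j=1$. *)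

(* Defs.v *)
From Stdlib Require Import Reals List Arith.
From Coquelicot Require Import Coquelicot.
Open Scope R_scope.

Definition lsum (l : list nat) (f : nat -> R) : R :=
  fold_right (fun n acc => f n + acc) 0 l.

(* An argument of an Euler sum: (s, barred). barred = true means z = -1. *)
Definition sgn (b : bool) (n : nat) : R := if b then (-1) ^ n else 1.

Fixpoint esum_trunc (N : nat) (l : list (nat * bool)) : R :=
  match l with
  | nil => 1
  | (s, b) :: l' =>
      lsum (seq 1 (N - 1))
        (fun n => sgn b n / (INR n ^ s) * esum_trunc n l')
  end.

Definition esum (l : list (nat * bool)) : R :=
  real (Lim_seq (fun N => esum_trunc N l)).

(* Truncated multiple T-value (without the factor 2^d):
   sum over N > m_1 > ... > m_d > 0 with m_j = d - j + 1 (mod 2),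
   i.e. the parity of m_j equals the parity of the length of the
   remaining list (s_j, ..., s_d). *)
Fixpoint T_trunc (N : nat) (l : list nat) : R :=
  match l with
  | nil => 1
  | s :: l' =>
      lsum (seq 1 (N - 1))
        (fun m => if Bool.eqb (Nat.odd m) (Nat.odd (length l))
                  then / (INR m ^ s) * T_trunc m l'
                  else 0)
  end.

Definition Tval (l : list nat) : R :=
  2 ^ (length l) * real (Lim_seq (fun N => T_trunc N l)).

(* Main.v *)
Require Import Defs.
From Stdlib Require Import Reals List Arith Lia Lra Psatz FunctionalExtensionality.
From Coquelicot Require Import Coquelicot.
Open Scope R_scope.

Lemma lsum_cons a l f : lsum (a :: l) f = f a + lsum l f.
Proof. reflexivity. Qed.
Lemma lsum_nil f : lsum nil f = 0.
Proof. reflexivity. Qed.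

Lemma lsum_app l1 l2 f : lsum (l1 ++ l2) f = lsum l1 f + lsum l2 f.
Proof. induction l1; simpl; [ring| rewrite IHl1; ring]. Qed.

Lemma lsum_ext_in l f g : (forall x, In x l -> f x = g x) -> lsum l f = lsum l g.
Proof. induction l; simpl; intros H; [reflexivity|]. rewrite H by auto. rewrite IHl by auto. reflexivity. Qed.

Lemma lsum_plus l f g : lsum l (fun x => f x + g x) = lsum l f + lsum l g.
Proof. induction l; simpl; [ring| rewrite IHl; ring]. Qed.

Lemma lsum_scal l c f : lsum l (fun x => c * f x) = c * lsum l f.
Proof. induction l; simpl; [ring| rewrite IHl; ring]. Qed.

Lemma lsum_zero l : lsum l (fun _ => 0) = 0.
Proof. induction l; simpl; [ring| rewrite IHl; ring]. Qed.

Lemma lsum_le l f g : (forall x, In x l -> f x <= g x) -> lsum l f <= lsum l g.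
Proof. induction l; simpl; intros H; [lra|].
  assert (lsum l f <= lsum l g) by (apply IHl; intros; apply H; now right).
  specialize (H a (or_introl eq_refl)). lra. Qed.

Lemma lsum_comm l1 l2 (g : nat -> nat -> R) :
  lsum l1 (fun a => lsum l2 (fun k => g a k)) = lsum l2 (fun k => lsum l1 (fun a => g a k)).
Proof. induction l1; simpl.
  - now rewrite lsum_zero.
  - rewrite IHl1. rewrite (lsum_plus l2 (fun k => g a k)). reflexivity. Qed.

Definition sm (N : nat) (f : nat -> R) : R := lsum (seq 1 (N - 1)) f.

Lemma sm_0 f : sm 0 f = 0. Proof. reflexivity. Qed.
Lemma sm_1 f : sm 1 f = 0. Proof. reflexivity. Qed.

Lemma sm_succ N f : (1 <= N)%nat -> sm (S N) f = sm N f + f N.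
Proof. intros HN. unfold sm. replace (S N - 1)%nat with (S (N-1)) by lia.
  rewrite seq_S, lsum_app, lsum_cons, lsum_nil. replace (1 + (N-1))%nat with N by lia. ring. Qed.

Lemma sm_ext N f g : (forall k, (1 <= k < N)%nat -> f k = g k) -> sm N f = sm N g.
Proof. intros H. unfold sm. apply lsum_ext_in. intros x Hx. apply in_seq in Hx. apply H. lia. Qed.

Lemma sm_plus N f g : sm N (fun x => f x + g x) = sm N f + sm N g.
Proof. apply lsum_plus. Qed.
Lemma sm_scal N c f : sm N (fun x => c * f x) = c * sm N f.
Proof. apply lsum_scal. Qed.
Lemma sm_minus N f g : sm N (fun x => f x - g x) = sm N f - sm N g.
Proof. unfold Rminus. rewrite sm_plus. f_equal.
  replace (fun x => - g x) with (fun x => (-1) * g x) by (apply functional_extensionality; intros; ring).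
  rewrite sm_scal. ring. Qed.
Lemma sm_zero N : sm N (fun _ => 0) = 0.
Proof. apply lsum_zero. Qed.
Lemma sm_le N f g : (forall k, (1 <= k < N)%nat -> f k <= g k) -> sm N f <= sm N g.
Proof. intros H. unfold sm. apply lsum_le. intros x Hx. apply in_seq in Hx. apply H. lia. Qed.
Lemma sm_nonneg N f : (forall k, (1 <= k < N)%nat -> 0 <= f k) -> 0 <= sm N f.
Proof. intros H. rewrite <- (sm_zero N). now apply sm_le. Qed.
Lemma sm_abs N f : Rabs (sm N f) <= sm N (fun k => Rabs (f k)).
Proof. unfold sm. induction (seq 1 (N-1)); simpl.
  - rewrite Rabs_R0; lra.
  - eapply Rle_trans; [apply Rabs_triang|]. lra. Qed.

Lemma sm_mono N M f : (forall k, (1 <= k)%nat -> 0 <= f k) -> (N <= M)%nat -> sm N f <= sm M f.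
Proof. intros Hf H. induction H; [lra|]. destruct m.
  - rewrite sm_1. rewrite sm_0 in IHle. lra.
  - rewrite sm_succ by lia. specialize (Hf (S m)). assert (0 <= f (S m)) by (apply Hf; lia). lra. Qed.

Lemma sm_comm N l (g : nat -> nat -> R) :
  lsum l (fun a => sm N (fun k => g a k)) = sm N (fun k => lsum l (fun a => g a k)).
Proof. apply lsum_comm. Qed.

Lemma sm_const N c : sm N (fun _ => c) = c * INR (N - 1).
Proof. induction N. - rewrite sm_0. simpl. ring.
  - destruct N. + rewrite sm_1. simpl. ring.
    + rewrite sm_succ by lia. rewrite IHN. replace (S (S N) - 1)%nat with (S (S N - 1)) by lia.
      rewrite S_INR. ring. Qed.

Lemma sm_range N K f : (K <= N)%nat ->
  sm N f - sm K f = sm N (fun p => if (K <=? p)%nat then f p else 0).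
Proof. intros H. induction H.
  - replace (sm K f - sm K f) with (sm K (fun _ => 0)) by (rewrite sm_zero; ring). apply sm_ext. intros k Hk.
    destruct (K <=? k)%nat eqn:E; [apply Nat.leb_le in E; lia| reflexivity].
  - destruct m.
    + assert (K = 0)%nat by lia. subst. rewrite sm_1, sm_0. rewrite sm_1. ring.
    + rewrite (sm_succ (S m) f) by lia. rewrite (sm_succ (S m) (fun p => _)) by lia. rewrite <- IHle.
      destruct (K <=? S m)%nat eqn:E; [|apply Nat.leb_gt in E; lia]. ring. Qed.

Lemma lsum_map_S l g : lsum (map S l) g = lsum l (fun q => g (S q)).
Proof. induction l; [reflexivity|]. cbn [map]. rewrite !lsum_cons. now rewrite IHl. Qed.

Lemma sm_shift1 n g : (1 <= n)%nat -> sm (S n) g = g 1%nat + sm n (fun q => g (S q)).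
Proof. intros H. unfold sm. replace (S n - 1)%nat with (S (n-1)) by lia. simpl (seq 1 (S (n-1))).
  rewrite lsum_cons. f_equal. rewrite <- seq_shift. apply lsum_map_S. Qed.

Lemma sm_rev n f : sm n (fun q => f (n - q)%nat) = sm n f.
Proof. induction n. - reflexivity.
  - destruct n. + reflexivity.
    + rewrite sm_shift1 by lia. replace (S (S n) - 1)%nat with (S n) by lia.
      rewrite (sm_ext (S n) (fun q => f (S (S n) - S q)%nat) (fun q => f (S n - q)%nat)).
      2:{ intros k Hk. f_equal. }
      rewrite IHn. rewrite (sm_succ (S n)) by lia. ring. Qed.

Lemma sm_shift N m f : (m < N)%nat ->
  sm N (fun i => if (m <? i)%nat then f (i - m)%nat else 0) = sm (N - m) f.
Proof. intros H. induction H.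
  - replace (S m - m)%nat with 1%nat by lia. rewrite sm_1. transitivity (sm (S m) (fun _ => 0)); [|apply sm_zero].
    apply sm_ext. intros k Hk. destruct (m <? k)%nat eqn:E; [apply Nat.ltb_lt in E; lia|reflexivity].
  - rewrite sm_succ by lia. rewrite IHle. replace (S m0 - m)%nat with (S (m0 - m)) by lia.
    rewrite sm_succ by lia. destruct (m <? m0)%nat eqn:E; [|apply Nat.ltb_ge in E; lia].
    reflexivity. Qed.

Lemma tri_swap N (h : nat -> nat -> R) :
  sm N (fun i => sm i (fun j => h i j)) = sm N (fun j => sm N (fun i => if (j <? i)%nat then h i j else 0)).
Proof. induction N. - reflexivity.
  - destruct N. + reflexivity.
    + rewrite sm_succ by lia. rewrite IHN.
      rewrite (sm_ext (S (S N)) (fun j => sm (S (S N)) (fun i => if (j <? i)%nat then h i j else 0))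
         (fun j => sm (S N) (fun i => if (j <? i)%nat then h i j else 0) + (if (j <? S N)%nat then h (S N) j else 0))).
      2:{ intros k Hk. now rewrite sm_succ by lia. }
      rewrite sm_plus. rewrite (sm_succ (S N)) by lia.
      rewrite (sm_succ (S N) (fun j => if (j <? S N)%nat then h (S N) j else 0)) by lia.
      rewrite Nat.ltb_irrefl.
      rewrite (sm_ext (S N) (fun i => if (S N <? i)%nat then h i (S N) else 0) (fun _ => 0)).
      2:{ intros k Hk. destruct (S N <? k)%nat eqn:E; [apply Nat.ltb_lt in E; lia|reflexivity]. }
      rewrite sm_zero.
      rewrite (sm_ext (S N) (fun j => if (j <? S N)%nat then h (S N) j else 0) (fun j => h (S N) j)).
      2:{ intros k Hk. destruct (k <? S N)%nat eqn:E; [reflexivity|apply Nat.ltb_ge in E; lia]. }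
      ring. Qed.

Lemma G1 M (h : nat -> nat -> R) :
  sm M (fun m => sm m (fun q => h (M - m)%nat q)) = sm M (fun n => sm n (fun q => h (n - q)%nat q)).
Proof.
  transitivity (sm M (fun p => sm (M - p) (fun q => h p q))).
  { rewrite <- (sm_rev M (fun p => sm (M - p) (fun q => h p q))). apply sm_ext.
    intros k Hk. replace (M - (M - k))%nat with k by lia. reflexivity. }
  induction M. - reflexivity.
  - destruct M. + reflexivity.
    + rewrite (sm_succ (S M) (fun n => sm n (fun q => h (n - q)%nat q))) by lia. rewrite <- IHM.
      rewrite (sm_ext (S (S M)) (fun p => sm (S (S M) - p) (fun q => h p q))
        (fun p => sm (S M - p) (fun q => h p q) + (if (p <? S M)%nat then h p (S M - p)%nat else 0))).
      2:{ intros k Hk. destruct (k <? S M)%nat eqn:E.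
          - apply Nat.ltb_lt in E. replace (S (S M) - k)%nat with (S (S M - k)) by lia.
            rewrite sm_succ by lia. reflexivity.
          - apply Nat.ltb_ge in E. assert (k = S M) by lia. subst.
            replace (S (S M) - S M)%nat with 1%nat by lia. replace (S M - S M)%nat with 0%nat by lia.
            rewrite sm_1, sm_0. ring. }
      rewrite sm_plus. rewrite (sm_succ (S M) (fun p => sm (S M - p) (fun q => h p q))) by lia.
      rewrite (sm_succ (S M) (fun p => if (p <? S M)%nat then h p (S M - p)%nat else 0)) by lia.
      rewrite Nat.ltb_irrefl. replace (S M - S M)%nat with 0%nat by lia. rewrite sm_0.
      rewrite (sm_ext (S M) (fun p => if (p <? S M)%nat then h p (S M - p)%nat else 0)
          (fun p => h p (S M - p)%nat)).
      2:{ intros k Hk. destruct (k <? S M)%nat eqn:E; [reflexivity|apply Nat.ltb_ge in E; lia]. }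
      rewrite <- (sm_rev (S M) (fun q => h (S M - q)%nat q)).
      rewrite (sm_ext (S M) (fun q => h (S M - (S M - q))%nat (S M - q)%nat) (fun p => h p (S M - p)%nat)).
      2:{ intros k Hk. replace (S M - (S M - k))%nat with k by lia. reflexivity. }
      ring. Qed.

Definition io (k : nat) : R := if Nat.odd k then 1 else 0.
Definition ie (k : nat) : R := if Nat.odd k then 0 else 1.
Definition Oh (n : nat) : R := sm n (fun k => io k / INR k).
Definition Hn (n : nat) : R := sm n (fun k => / INR k).

Lemma io_sq k : io k * io k = io k.
Proof. unfold io; destruct (Nat.odd k); ring. Qed.
Lemma io_bound k : 0 <= io k <= 1.
Proof. unfold io; destruct (Nat.odd k); lra. Qed.
Lemma ie_bound k : 0 <= ie k <= 1.
Proof. unfold ie; destruct (Nat.odd k); lra. Qed.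

Lemma par1 n q : (q <= n)%nat -> io (n - q) * io q = ie n * io q.
Proof. intros H. unfold io, ie. rewrite Nat.odd_sub by lia.
  destruct (Nat.odd n), (Nat.odd q); simpl; ring. Qed.
Lemma par2 n q : (q <= n)%nat -> ie n * io (n - q) = ie n * io q.
Proof. intros H. unfold io, ie. rewrite Nat.odd_sub by lia.
  destruct (Nat.odd n), (Nat.odd q); simpl; ring. Qed.
Lemma par3 M m : Nat.odd M = true -> (m <= M)%nat -> io (M - m) = ie m.
Proof. intros HM H. unfold io, ie. rewrite Nat.odd_sub by lia. rewrite HM.
  destruct (Nat.odd m); reflexivity. Qed.
Lemma par4 p m : Nat.odd m = false -> io (p + m) = io p.
Proof. intros Hm. unfold io. rewrite Nat.odd_add, Hm. destruct (Nat.odd p); reflexivity. Qed.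

Lemma INR_pos k : (1 <= k)%nat -> 0 < INR k.
Proof. intros. apply lt_0_INR. lia. Qed.

Lemma Oh_succ m : (1 <= m)%nat -> Oh (S m) = Oh m + io m / INR m.
Proof. intros. unfold Oh. now rewrite sm_succ. Qed.

Lemma Oh_sq m : Oh m ^ 2 = 2 * sm m (fun k => io k / INR k * Oh k) + sm m (fun k => io k / INR k ^ 2).
Proof. induction m. - unfold Oh. rewrite !sm_0. ring.
  - destruct m. + unfold Oh. rewrite !sm_1. ring.
    + rewrite Oh_succ by lia. rewrite !(sm_succ (S m)) by lia.
      replace ((Oh (S m) + io (S m) / INR (S m)) ^ 2) with
        (Oh (S m) ^ 2 + 2 * (io (S m) / INR (S m) * Oh (S m)) + (io (S m) * io (S m)) / INR (S m) ^ 2).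
      2:{ assert (0 < INR (S m)) by (apply INR_pos; lia). field. lra. }
      rewrite io_sq, IHm. ring. Qed.

Lemma PQ M : Nat.odd M = true ->
  sm M (fun m => ie m * Oh m / (INR M - INR m)) = 2 * sm M (fun n => ie n * Oh n / INR n).
Proof. intros HM.
  set (h := fun p q => io p * io q / (INR p * INR q)).
  transitivity (sm M (fun m => sm m (fun q => h (M - m)%nat q))).
  { apply sm_ext. intros m Hm. unfold h, Oh. rewrite <- par3 with (M := M) by (auto; lia).
    rewrite <- minus_INR by lia.
    assert (0 < INR (M - m)) by (apply INR_pos; lia).
    unfold Rdiv at 1. rewrite Rmult_assoc, (Rmult_comm (sm m _)), <- Rmult_assoc.
    rewrite <- sm_scal. apply sm_ext. intros q Hq. assert (0 < INR q) by (apply INR_pos; lia).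
    field. lra. }
  rewrite G1. rewrite <- sm_scal. apply sm_ext. intros n Hn0.
  assert (0 < INR n) by (apply INR_pos; lia).
  transitivity (sm n (fun q => ie n / INR n * (io q / (INR n - INR q))) + sm n (fun q => ie n / INR n * (io q / INR q))).
  { rewrite <- sm_plus. apply sm_ext. intros q Hq. unfold h.
    assert (0 < INR q) by (apply INR_pos; lia). assert (INR q < INR n) by (apply lt_INR; lia).
    rewrite minus_INR by lia. rewrite par1 by lia. field. lra. }
  rewrite !sm_scal.
  replace (sm n (fun q => io q / (INR n - INR q))) with (sm n (fun p => io (n - p)%nat / INR p)).
  2:{ rewrite <- (sm_rev n (fun p => io (n - p)%nat / INR p)). apply sm_ext. intros q Hq.
      replace (n - (n - q))%nat with q by lia. rewrite minus_INR by lia. reflexivity. }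
  replace (ie n / INR n * sm n (fun p => io (n - p)%nat / INR p)) with (/ INR n * sm n (fun p => ie n * (io (n - p)%nat / INR p))).
  2:{ rewrite sm_scal. field. lra. }
  rewrite (sm_ext n (fun p => ie n * (io (n - p)%nat / INR p)) (fun p => ie n * (io p / INR p))).
  2:{ intros p Hp. unfold Rdiv. rewrite <- !Rmult_assoc. rewrite par2 by lia. reflexivity. }
  rewrite sm_scal. unfold Oh. field. lra.
Qed.

Lemma geom u x y : lsum (seq 1 u) (fun a => x ^ a * y ^ (u + 1 - a)) * (y - x) = x * y ^ (u + 1) - x ^ (u + 1) * y.
Proof. induction u.
  - simpl. ring.
  - rewrite seq_S, lsum_app, lsum_cons, lsum_nil.
    rewrite (lsum_ext_in (seq 1 u) (fun a => x ^ a * y ^ (S u + 1 - a)) (fun a => y * (x ^ a * y ^ (u + 1 - a)))).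
    2:{ intros a Ha. apply in_seq in Ha. replace (S u + 1 - a)%nat with (S (u + 1 - a)) by lia. simpl. ring. }
    rewrite lsum_scal. replace (S u + 1 - (1 + u))%nat with 1%nat by lia.
    replace (S u + 1)%nat with (S (u + 1)) by lia. replace (1 + u)%nat with (u + 1)%nat by lia.
    simpl pow. rewrite Rmult_plus_distr_r, Rmult_assoc, IHu. ring. Qed.

Lemma Fid u m m2 : (2 <= u)%nat -> (1 <= m2)%nat -> (m2 < m)%nat ->
  lsum (seq 2 (u - 1)) (fun a => / INR m ^ a * / INR m2 ^ (u + 1 - a))
  = (/ INR m2 ^ u - / INR m ^ u) / (INR m - INR m2) - / (INR m * INR m2 ^ u).
Proof. intros Hu H1 H2.
  assert (Hm2 : 0 < INR m2) by (apply INR_pos; lia).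
  assert (Hlt : INR m2 < INR m) by (apply lt_INR; lia).
  set (x := / INR m). set (y := / INR m2).
  assert (Hx : x * INR m = 1) by (unfold x; field; lra).
  assert (Hy : y * INR m2 = 1) by (unfold y; field; lra).
  assert (Hxy : y - x <> 0).
  { unfold x, y. intro E. assert (/ INR m2 * INR m2 * INR m = / INR m * INR m * INR m2) by
      (replace (/ INR m) with (/ INR m2) by lra; ring).
    rewrite Rinv_l in H by lra. rewrite Rinv_l in H by lra. lra. }
  rewrite (lsum_ext_in _ _ (fun a => x ^ a * y ^ (u + 1 - a))).
  2:{ intros a _. unfold x, y. rewrite !pow_inv. reflexivity. }
  rewrite <- !pow_inv. fold x y.
  pose proof (geom u x y) as G.
  replace (seq 1 u) with (1%nat :: seq 2 (u - 1)) in G.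
  2:{ destruct u; [lia|]. simpl. f_equal. f_equal. lia. }
  rewrite lsum_cons in G. replace (u + 1 - 1)%nat with u in G by lia.
  assert (E : lsum (seq 2 (u - 1)) (fun a => x ^ a * y ^ (u + 1 - a)) =
     (x * y ^ (u + 1) - x ^ (u + 1) * y) / (y - x) - x ^ 1 * y ^ u).
  { rewrite <- G. field. auto. }
  rewrite E. rewrite !pow_add. simpl pow.
  set (X := x ^ u). set (Y := y ^ u).
  rewrite Rinv_mult, <- pow_inv. fold x y Y. clearbody X Y. unfold x, y in *.
  field. repeat split; lra.
Qed.

Definition Fs u m m2 := lsum (seq 2 (u - 1)) (fun a => / INR m ^ a * / INR m2 ^ (u + 1 - a)).
Definition Lt u N := sm N (fun m => io m * sm m (fun m2 => ie m2 * Oh m2 * Fs u m m2)).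
Definition P1 u N := sm N (fun n => ie n / INR n ^ u * sm n (fun k => io k / INR k * Oh k)).
Definition P2 u N := sm N (fun n => io n / INR n ^ u * sm n (fun k => ie k / INR k * Oh k)).
Definition Qt u N := sm N (fun n => ie n / INR n ^ u * sm n (fun k => io k / INR k ^ 2)).
Definition Err u N := sm N (fun m => ie m * Oh m / INR m ^ u * (Oh N - Oh (N - m))).

Lemma odd_cases k : (io k = 1 /\ ie k = 0 /\ Nat.odd k = true) \/ (io k = 0 /\ ie k = 1 /\ Nat.odd k = false).
Proof. unfold io, ie. destruct (Nat.odd k); auto. Qed.

Lemma decomp u N : (2 <= u)%nat -> Lt u N = 2 * P1 u N + Qt u N - 2 * P2 u N - Err u N.
Proof. intros Hu.
  set (c := fun m2 => ie m2 * Oh m2 / INR m2 ^ u).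
  transitivity (sm N (fun m => sm m (fun m2 => io m * (c m2 * (/ (INR m - INR m2) - / INR m))))
     - sm N (fun m => io m / INR m ^ u * sm m (fun m2 => ie m2 * Oh m2 / (INR m - INR m2)))).
  { unfold Lt. rewrite <- sm_minus. apply sm_ext. intros m Hm.
    rewrite <- sm_scal, <- sm_scal. unfold Rdiv at 1. rewrite <- sm_minus.
    apply sm_ext. intros m2 Hm2. unfold Fs. rewrite Fid by lia. unfold c.
    assert (0 < INR m2) by (apply INR_pos; lia). assert (INR m2 < INR m) by (apply lt_INR; lia).
    field. repeat split; try lra; apply pow_nonzero; lra. }
  replace (sm N (fun m => io m / INR m ^ u * sm m (fun m2 => ie m2 * Oh m2 / (INR m - INR m2)))) with (2 * P2 u N).
  2:{ unfold P2. rewrite <- sm_scal. apply sm_ext. intros m Hm.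
      destruct (odd_cases m) as [[E1 [E2 E3]]|[E1 [E2 E3]]]; rewrite E1.
      - rewrite PQ by auto. rewrite (sm_ext m (fun k => ie k / INR k * Oh k) (fun n => ie n * Oh n / INR n)).
        2:{ intros; unfold Rdiv; ring. } ring.
      - unfold Rdiv. ring. }
  rewrite tri_swap.
  transitivity (sm N (fun m2 => c m2 * Oh m2) - Err u N - 2 * P2 u N).
  2:{ replace (sm N (fun m2 => c m2 * Oh m2)) with (2 * P1 u N + Qt u N). ring.
      unfold P1, Qt. rewrite <- sm_scal, <- sm_plus. apply sm_ext. intros m Hm. unfold c.
      replace (ie m * Oh m / INR m ^ u * Oh m) with (ie m / INR m ^ u * Oh m ^ 2) by (unfold Rdiv; ring).
      rewrite Oh_sq. ring. }
  f_equal. unfold Err. rewrite <- sm_minus. apply sm_ext. intros m2 Hm2.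
  destruct (odd_cases m2) as [[E1 [E2 E3]]|[E1 [E2 E3]]].
  { unfold c. rewrite E2. rewrite (sm_ext N _ (fun _ => 0)). rewrite sm_zero. unfold Rdiv; ring.
    intros m Hm. destruct (m2 <? m)%nat; unfold Rdiv; ring. }
  rewrite (sm_ext N _ (fun m => c m2 * ((if (m2 <? m)%nat then (fun p => io p / INR p) (m - m2)%nat else 0)
                                      - (if (S m2 <=? m)%nat then io m / INR m else 0)))).
  2:{ intros m Hm. destruct (m2 <? m)%nat eqn:E.
      - apply Nat.ltb_lt in E. destruct (S m2 <=? m)%nat eqn:E'; [|apply Nat.leb_gt in E'; lia].
        assert (Hio : io (m - m2)%nat = io m).
        { rewrite <- par4 with (m := m2) by auto. f_equal. lia. }
        rewrite minus_INR by lia. rewrite Hio. unfold Rdiv. ring.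
      - apply Nat.ltb_ge in E. destruct (S m2 <=? m)%nat eqn:E'; [apply Nat.leb_le in E'; lia|]. ring. }
  rewrite sm_scal, sm_minus. rewrite (sm_shift N m2 (fun p => io p / INR p)) by lia. replace (sm N (fun x => if (S m2 <=? x)%nat then io x / INR x else 0)) with (Oh N - Oh (S m2)) by (unfold Oh; apply (sm_range N (S m2) (fun p => io p / INR p)); lia).
  fold (Oh (N - m2)) (Oh N). rewrite Oh_succ by lia. rewrite E1. unfold c. unfold Rdiv. ring.
Qed.

Lemma Hn_succ n : (1 <= n)%nat -> Hn (S n) = Hn n + / INR n.
Proof. intros. unfold Hn. now rewrite sm_succ. Qed.
Lemma Hn_nonneg n : 0 <= Hn n.
Proof. unfold Hn. apply sm_nonneg. intros k Hk. left. apply Rinv_0_lt_compat, INR_pos; lia. Qed.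
Lemma Hn_mono n m : (n <= m)%nat -> Hn n <= Hn m.
Proof. intros. unfold Hn. apply sm_mono; auto. intros k Hk. left. apply Rinv_0_lt_compat, INR_pos; lia. Qed.
Lemma Hn_ge1 n : (2 <= n)%nat -> 1 <= Hn n.
Proof. intros H. assert (Hn 2 = 1) by (unfold Hn; rewrite sm_succ by lia; rewrite sm_1; simpl; rewrite Rinv_1; ring).
  rewrite <- H0. now apply Hn_mono. Qed.
Lemma Oh_nonneg n : 0 <= Oh n.
Proof. unfold Oh. apply sm_nonneg. intros k Hk. pose proof (io_bound k). assert (0 < INR k) by (apply INR_pos; lia).
  unfold Rdiv. apply Rmult_le_pos; [lra| left; now apply Rinv_0_lt_compat]. Qed.
Lemma Oh_le_Hn n : Oh n <= Hn n.
Proof. unfold Oh, Hn. apply sm_le. intros k Hk. pose proof (io_bound k). assert (0 < / INR k) by (apply Rinv_0_lt_compat, INR_pos; lia).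
  unfold Rdiv. nra. Qed.

Lemma pot_step n h : 1 <= n -> 0 <= h ->
  h ^ 2 / (n + 1) ^ 2 + ((h + / (n + 1)) ^ 2 + 2 * (h + / (n + 1)) + 3) / (n + 1) <= (h ^ 2 + 2 * h + 3) / n.
Proof. intros Hn0 Hh.
  set (d := / (n + 1)). set (A := h ^ 2 + 2 * h + 3).
  assert (Hd0 : 0 < d) by (unfold d; apply Rinv_0_lt_compat; lra).
  assert (Hd1 : d <= 1) by (unfold d; rewrite <- Rinv_1; apply Rinv_le_contravar; lra).
  assert (E1 : A / n = A / (n * (n + 1)) + A * d) by (unfold d; field; lra).
  assert (E2 : / (n * (n + 1)) >= d ^ 2).
  { unfold d. rewrite pow_inv. apply Rle_ge, Rinv_le_contravar; nra. }
  assert (E3 : h ^ 2 / (n + 1) ^ 2 = h ^ 2 * d ^ 2) by (unfold d; field; lra).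
  assert (E4 : ((h + d) ^ 2 + 2 * (h + d) + 3) / (n + 1) = (A + 2 * h * d + d ^ 2 + 2 * d) * d) by (unfold A, d; field; lra).
  rewrite E3, E4, E1. unfold Rdiv. assert (0 < A) by (unfold A; nra).
  assert (A * / (n * (n + 1)) >= A * d ^ 2) by (apply Rle_ge, Rmult_le_compat_l; lra).
  assert (d ^ 3 <= d ^ 2) by (simpl; nra).
  replace (h ^ 2 * d ^ 2 + (A + 2 * h * d + d ^ 2 + 2 * d) * d) with (A * d + A * d ^ 2 + (d ^ 3 - d ^ 2)) by (unfold A; ring).
  lra. Qed.

Lemma sum_bound_aux N : (1 <= N)%nat ->
  sm (S N) (fun n => Hn n ^ 2 / INR n ^ 2) + (Hn (S N) ^ 2 + 2 * Hn (S N) + 3) / INR N <= 6.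
Proof. intros H. induction H.
  - rewrite sm_succ by lia. rewrite sm_1. unfold Hn. rewrite (sm_succ 1) by lia. rewrite !sm_1. simpl. lra.
  - rewrite sm_succ by lia. rewrite (Hn_succ (S m)) by lia.
    pose proof (pot_step (INR m) (Hn (S m))). rewrite S_INR.
    assert (1 <= INR m) by (apply (le_INR 1); lia). pose proof (Hn_nonneg (S m)).
    specialize (H0 ltac:(lra) ltac:(lra)). lra. Qed.

Lemma sum_bound N : sm N (fun n => Hn n ^ 2 / INR n ^ 2) <= 6.
Proof. destruct N. - rewrite sm_0; lra. - destruct N. + rewrite sm_1; lra.
  + pose proof (sum_bound_aux (S N) ltac:(lia)).
    assert (0 <= (Hn (S (S N)) ^ 2 + 2 * Hn (S (S N)) + 3) / INR (S N)).
    { pose proof (Hn_nonneg (S (S N))). assert (0 < INR (S N)) by (apply INR_pos; lia).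
      unfold Rdiv. apply Rmult_le_pos; [nra| left; now apply Rinv_0_lt_compat]. }
    lra. Qed.

Lemma sm_incr f N : (forall n, (1 <= n)%nat -> 0 <= f n) -> sm N f <= sm (S N) f.
Proof. intros H. destruct N. - rewrite sm_0, sm_1; lra. - rewrite (sm_succ (S N)) by lia. specialize (H (S N) ltac:(lia)). lra. Qed.

Lemma conv_abs (g b : nat -> R) M : (forall n, (1 <= n)%nat -> Rabs (g n) <= b n) ->
  (forall N, sm N b <= M) -> ex_finite_lim_seq (fun N => sm N g).
Proof. intros Hg Hb.
  assert (Hb0 : forall n, (1 <= n)%nat -> 0 <= b n) by (intros n Hn0; specialize (Hg n Hn0); pose proof (Rabs_pos (g n)); lra).
  destruct (ex_finite_lim_seq_incr (fun N => sm N (fun n => g n + b n)) (2 * M)) as [l1 H1].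
  { intros n. apply sm_incr. intros k Hk. specialize (Hg k Hk). apply Rabs_le_between in Hg; lra. }
  { intros n. replace (2 * M) with (M + M) by ring. rewrite sm_plus.
    assert (sm n g <= sm n b). { apply sm_le. intros k Hk. specialize (Hg k ltac:(lia)). apply Rabs_le_between in Hg; lra. }
    specialize (Hb n). lra. }
  destruct (ex_finite_lim_seq_incr (fun N => sm N b) M) as [l2 H2].
  { intros n. apply sm_incr. auto. }
  { auto. }
  exists (l1 - l2). apply is_lim_seq_ext with (u := fun N => sm N (fun n => g n + b n) - sm N b).
  { intros N. rewrite sm_plus. ring. }
  now apply is_lim_seq_minus'. Qed.

Lemma conv_outer (g : nat -> R) : (forall n, (1 <= n)%nat -> Rabs (g n) <= Hn n ^ 2 / INR n ^ 2) ->
  ex_finite_lim_seq (fun N => sm N g).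
Proof. intros H. apply conv_abs with (b := fun n => Hn n ^ 2 / INR n ^ 2) (M := 6); auto. apply sum_bound. Qed.

Lemma bnd_inner1 n f : (forall m, (1 <= m < n)%nat -> Rabs (f m) <= / INR m) -> Rabs (sm n f) <= Hn n.
Proof. intros H. eapply Rle_trans; [apply sm_abs|]. unfold Hn. apply sm_le. auto. Qed.

Lemma bnd_inner2 n f : (forall m, (1 <= m < n)%nat -> Rabs (f m) <= / INR m * Hn m) -> Rabs (sm n f) <= Hn n ^ 2.
Proof. intros H. eapply Rle_trans; [apply sm_abs|].
  apply Rle_trans with (sm n (fun m => Hn n * / INR m)).
  { apply sm_le. intros k Hk. eapply Rle_trans; [apply H; auto|].
    rewrite Rmult_comm. apply Rmult_le_compat_r. left; apply Rinv_0_lt_compat, INR_pos; lia. apply Hn_mono; lia. }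
  rewrite sm_scal. fold (Hn n). simpl. lra. Qed.

Lemma outer_bnd p n c Y : (2 <= p)%nat -> (1 <= n)%nat -> Rabs c <= 1 -> Rabs Y <= Hn n ^ 2 ->
  Rabs (c / INR n ^ p * Y) <= Hn n ^ 2 / INR n ^ 2.
Proof. intros Hp Hn1 Hc HY.
  assert (Hn0 : 1 <= INR n) by (apply (le_INR 1); lia).
  assert (E : INR n ^ 2 <= INR n ^ p) by (apply Rle_pow; auto).
  assert (P2 : 0 < INR n ^ 2) by (apply pow_lt; lra).
  assert (I : / INR n ^ p <= / INR n ^ 2) by (apply Rinv_le_contravar; auto).
  assert (Ip : 0 < / INR n ^ p) by (apply Rinv_0_lt_compat; lra).
  unfold Rdiv. rewrite !Rabs_mult. rewrite (Rabs_pos_eq (/ INR n ^ p)) by lra.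
  pose proof (Rabs_pos c). pose proof (Rabs_pos Y).
  replace (Hn n ^ 2 * / INR n ^ 2) with (1 * / INR n ^ 2 * Hn n ^ 2) by ring.
  apply Rmult_le_compat; try nra. Qed.

Lemma sgn_abs b k : Rabs (sgn b k) = 1.
Proof. unfold sgn. destruct b. apply pow_1_abs. apply Rabs_R1. Qed.

Lemma inner_bnd p m c Y B : (1 <= p)%nat -> (1 <= m)%nat -> Rabs c <= 1 -> Rabs Y <= B ->
  Rabs (c / INR m ^ p * Y) <= / INR m * B.
Proof. intros Hp Hm1 Hc HY.
  assert (Hn0 : 1 <= INR m) by (apply (le_INR 1); lia).
  assert (E : INR m ^ 1 <= INR m ^ p) by (apply Rle_pow; auto). simpl in E. rewrite Rmult_1_r in E.
  assert (I : / INR m ^ p <= / INR m) by (apply Rinv_le_contravar; lra).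
  assert (Ip : 0 < / INR m ^ p) by (apply Rinv_0_lt_compat; lra).
  unfold Rdiv. rewrite !Rabs_mult. rewrite (Rabs_pos_eq (/ INR m ^ p)) by lra.
  pose proof (Rabs_pos c). pose proof (Rabs_pos Y).
  replace (/ INR m * B) with (1 * / INR m * B) by ring.
  apply Rmult_le_compat; try nra. Qed.

Lemma conv_esum u b1 b2 b3 : (2 <= u)%nat ->
  ex_finite_lim_seq (fun N => esum_trunc N ((u, b1) :: (1%nat, b2) :: (1%nat, b3) :: nil)).
Proof. intros Hu.
  change (ex_finite_lim_seq (fun N => sm N (fun n => sgn b1 n / INR n ^ u * esum_trunc n ((1%nat, b2) :: (1%nat, b3) :: nil)))).
  apply conv_outer. intros n Hn1. apply outer_bnd; auto. rewrite sgn_abs; lra.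
  change (Rabs (sm n (fun m => sgn b2 m / INR m ^ 1 * esum_trunc m ((1%nat, b3) :: nil))) <= Hn n ^ 2).
  apply bnd_inner2. intros m Hm. apply inner_bnd; try lia. rewrite sgn_abs; lra.
  change (Rabs (sm m (fun k => sgn b3 k / INR k ^ 1 * 1)) <= Hn m).
  apply bnd_inner1. intros k Hk. rewrite Rmult_1_r. replace (/ INR k) with (/ INR k * 1) by ring.
  replace (sgn b3 k / INR k ^ 1) with (sgn b3 k / INR k ^ 1 * 1) by ring.
  apply inner_bnd; try lia. rewrite sgn_abs; lra. rewrite Rabs_R1; lra. Qed.

Lemma conv_T a b : (2 <= a)%nat -> (1 <= b)%nat ->
  ex_finite_lim_seq (fun N => T_trunc N (a :: b :: 1%nat :: nil)).
Proof. intros Ha Hb.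
  change (ex_finite_lim_seq (fun N => sm N (fun m => if Bool.eqb (Nat.odd m) (Nat.odd 3) then / (INR m ^ a) * T_trunc m (b :: 1%nat :: nil) else 0))).
  apply conv_outer. intros n Hn1.
  assert (0 <= Hn n ^ 2 / INR n ^ 2).
  { assert (0 < INR n ^ 2) by (apply pow_lt, INR_pos; lia). unfold Rdiv. apply Rmult_le_pos; [apply pow2_ge_0| left; now apply Rinv_0_lt_compat]. }
  destruct (Bool.eqb _ _); [|rewrite Rabs_R0; lra].
  replace (/ INR n ^ a * T_trunc n (b :: 1%nat :: nil)) with (1 / INR n ^ a * T_trunc n (b :: 1%nat :: nil)) by (unfold Rdiv; ring).
  apply outer_bnd; auto. rewrite Rabs_R1; lra.
  change (Rabs (sm n (fun m => if Bool.eqb (Nat.odd m) (Nat.odd 2) then / (INR m ^ b) * T_trunc m (1%nat :: nil) else 0)) <= Hn n ^ 2).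
  apply bnd_inner2. intros m Hm.
  assert (0 <= / INR m * Hn m) by (apply Rmult_le_pos; [left; apply Rinv_0_lt_compat, INR_pos; lia| apply Hn_nonneg]).
  destruct (Bool.eqb _ _); [|rewrite Rabs_R0; lra].
  replace (/ INR m ^ b * T_trunc m (1%nat :: nil)) with (1 / INR m ^ b * T_trunc m (1%nat :: nil)) by (unfold Rdiv; ring).
  apply inner_bnd; try lia. rewrite Rabs_R1; lra.
  change (Rabs (sm m (fun k => if Bool.eqb (Nat.odd k) (Nat.odd 1) then / (INR k ^ 1) * 1 else 0)) <= Hn m).
  apply bnd_inner1. intros k Hk.
  assert (0 < / INR k) by (apply Rinv_0_lt_compat, INR_pos; lia).
  destruct (Bool.eqb _ _); [|rewrite Rabs_R0; lra]. simpl. rewrite Rmult_1_r, Rmult_1_r. rewrite Rabs_pos_eq; lra. Qed.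

Lemma ie_abs k : Rabs (ie k) <= 1.
Proof. pose proof (ie_bound k). rewrite Rabs_pos_eq; lra. Qed.
Lemma io_abs k : Rabs (io k) <= 1.
Proof. pose proof (io_bound k). rewrite Rabs_pos_eq; lra. Qed.

Lemma inner_P k (c : R) : (1 <= k)%nat -> 0 <= c <= 1 -> Rabs (c / INR k * Oh k) <= / INR k * Hn k.
Proof. intros Hk Hc. assert (0 < / INR k) by (apply Rinv_0_lt_compat, INR_pos; lia).
  pose proof (Oh_nonneg k). pose proof (Oh_le_Hn k).
  assert (0 <= c * / INR k) by (apply Rmult_le_pos; lra).
  unfold Rdiv. rewrite Rabs_pos_eq by (apply Rmult_le_pos; lra).
  replace (/ INR k * Hn k) with ((1 * / INR k) * Hn k) by ring.
  apply Rmult_le_compat; try lra. apply Rmult_le_compat_r; lra. Qed.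

Lemma conv_P1 u : (2 <= u)%nat -> ex_finite_lim_seq (P1 u).
Proof. intros Hu. unfold P1. apply conv_outer. intros n Hn1. apply outer_bnd; auto. apply ie_abs.
  apply bnd_inner2. intros m Hm. apply inner_P. lia. apply io_bound. Qed.
Lemma conv_P2 u : (2 <= u)%nat -> ex_finite_lim_seq (P2 u).
Proof. intros Hu. unfold P2. apply conv_outer. intros n Hn1. apply outer_bnd; auto. apply io_abs.
  apply bnd_inner2. intros m Hm. apply inner_P. lia. apply ie_bound. Qed.
Lemma conv_Qt u : (2 <= u)%nat -> ex_finite_lim_seq (Qt u).
Proof. intros Hu. unfold Qt. apply conv_outer. intros n Hn1. apply outer_bnd; auto. apply ie_abs.
  destruct (Nat.eq_dec n 1). { subst. rewrite sm_1, Rabs_R0. apply pow2_ge_0. }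
  assert (1 <= Hn n) by (apply Hn_ge1; lia).
  apply Rle_trans with (Hn n); [|simpl; nra].
  apply bnd_inner1. intros k Hk.
  replace (io k / INR k ^ 2) with (io k / INR k ^ 2 * 1) by ring.
  replace (/ INR k) with (/ INR k * 1) by ring.
  apply inner_bnd; try lia. apply io_abs. rewrite Rabs_R1; lra. Qed.

Lemma R_bounds N m : (1 <= m < N)%nat ->
  0 <= Oh N - Oh (N - m) <= Hn N /\ ((2 * m <= N)%nat -> Oh N - Oh (N - m) <= 2 * INR m / INR N).
Proof. intros Hm.
  assert (E : Oh N - Oh (N - m) = sm N (fun p => if (N - m <=? p)%nat then io p / INR p else 0)).
  { unfold Oh. apply (sm_range N (N - m) (fun p => io p / INR p)). lia. }
  rewrite E. split; [split|].
  - apply sm_nonneg. intros k Hk. destruct (_ <=? _)%nat; [|lra].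
    pose proof (io_bound k). assert (0 < / INR k) by (apply Rinv_0_lt_compat, INR_pos; lia). unfold Rdiv. nra.
  - unfold Hn. apply sm_le. intros k Hk. pose proof (io_bound k). assert (0 < / INR k) by (apply Rinv_0_lt_compat, INR_pos; lia).
    destruct (_ <=? _)%nat; unfold Rdiv; nra.
  - intros H2. apply Rle_trans with (sm N (fun p => if (N - m <=? p)%nat then 2 / INR N else 0)).
    + apply sm_le. intros k Hk. destruct (N - m <=? k)%nat eqn:Ek; [|lra]. apply Nat.leb_le in Ek.
      pose proof (io_bound k). assert (0 < INR k) by (apply INR_pos; lia).
      assert (INR N <= 2 * INR k) by (replace 2 with (INR 2) by reflexivity; rewrite <- mult_INR; apply le_INR; lia).
      assert (0 < INR N) by (apply INR_pos; lia).
      apply Rle_trans with (/ INR k). { unfold Rdiv. assert (0 < / INR k) by (apply Rinv_0_lt_compat; lra). nra. }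
      apply Rle_trans with (/ (INR N / 2)). { apply Rinv_le_contravar; lra. } right. field. lra.
    + rewrite <- (sm_range N (N - m) (fun _ => 2 / INR N)) by lia. rewrite !sm_const.
      assert (INR (N - 1) = INR (N - m - 1) + INR m) by (rewrite <- plus_INR; f_equal; lia).
      assert (0 < INR N) by (apply INR_pos; lia). rewrite H. right. field. lra. Qed.

Lemma term_bnd u N m : (2 <= u)%nat -> (1 <= m < N)%nat ->
  0 <= ie m * Oh m / INR m ^ u * (Oh N - Oh (N - m)) <= 2 * Hn N / INR N * / INR m + 4 * (Hn N ^ 2 / INR N ^ 2).
Proof. intros Hu Hm. destruct (R_bounds N m Hm) as [[R0 R1] R2].
  set (R := Oh N - Oh (N - m)) in *.
  assert (Ha : 1 <= INR m) by (apply (le_INR 1); lia).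
  assert (Han : INR m < INR N) by (apply lt_INR; lia).
  set (a := INR m) in *. set (n := INR N) in *.
  assert (Ea : a ^ 2 <= a ^ u) by (apply Rle_pow; auto).
  assert (Ia : / a ^ u <= / a ^ 2) by (apply Rinv_le_contravar; [apply pow_lt; lra| auto]).
  assert (Ip : 0 < / a ^ u) by (apply Rinv_0_lt_compat, pow_lt; lra).
  pose proof (ie_bound m). pose proof (Oh_nonneg m). pose proof (Oh_le_Hn m).
  assert (HmN : Hn m <= Hn N) by (apply Hn_mono; lia).
  set (X := ie m * Oh m / a ^ u).
  assert (X0 : 0 <= X) by (unfold X, Rdiv; apply Rmult_le_pos; [nra|lra]).
  assert (X1 : X <= Hn N / a ^ 2).
  { unfold X, Rdiv. assert (ie m * Oh m <= Hn N) by nra. pose proof (Hn_nonneg N).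
    apply Rmult_le_compat; try nra. }
  assert (P1 : 0 <= 2 * Hn N / n * / a).
  { pose proof (Hn_nonneg N). unfold Rdiv. apply Rmult_le_pos; [apply Rmult_le_pos|]; try (left; apply Rinv_0_lt_compat); lra. }
  assert (P2 : 0 <= 4 * (Hn N ^ 2 / n ^ 2)).
  { unfold Rdiv. assert (0 < / n ^ 2) by (apply Rinv_0_lt_compat, pow_lt; lra). pose proof (pow2_ge_0 (Hn N)). nra. }
  split. { apply Rmult_le_pos; lra. }
  fold X. destruct (le_lt_dec (2 * m) N) as [H2|H2].
  - specialize (R2 H2). assert (X * R <= Hn N / a ^ 2 * (2 * a / n)) by (apply Rmult_le_compat; lra).
    assert (Hn N / a ^ 2 * (2 * a / n) = 2 * Hn N / n * / a) by (field; lra). lra.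
  - assert (n < 2 * a) by (unfold n, a; replace 2 with (INR 2) by reflexivity; rewrite <- mult_INR; apply lt_INR; lia).
    assert (X * R <= Hn N / a ^ 2 * Hn N) by (apply Rmult_le_compat; lra).
    assert (/ a ^ 2 <= 4 * / n ^ 2).
    { replace (4 * / n ^ 2) with (/ ((n / 2) ^ 2)) by (field; lra). apply Rinv_le_contravar. apply pow_lt; lra.
      apply pow_incr; lra. }
    assert (Hn N / a ^ 2 * Hn N <= 4 * (Hn N ^ 2 / n ^ 2)).
    { unfold Rdiv. pose proof (Hn_nonneg N). replace (Hn N * / a ^ 2 * Hn N) with (Hn N ^ 2 * / a ^ 2) by ring.
      pose proof (pow2_ge_0 (Hn N)). nra. }
    lra. Qed.

Lemma Err_bnd u N : (2 <= u)%nat -> (1 <= N)%nat -> 0 <= Err u N <= 6 * Hn N ^ 2 / INR N.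
Proof. intros Hu HN. unfold Err. split.
  - apply sm_nonneg. intros m Hm. apply (term_bnd u N m); auto.
  - apply Rle_trans with (sm N (fun m => 2 * Hn N / INR N * / INR m + 4 * (Hn N ^ 2 / INR N ^ 2))).
    + apply sm_le. intros m Hm. apply (term_bnd u N m); auto.
    + rewrite sm_plus, sm_scal, sm_const. fold (Hn N).
      assert (0 < INR N) by (apply INR_pos; lia).
      assert (INR (N - 1) <= INR N) by (apply le_INR; lia).
      assert (0 <= Hn N ^ 2 / INR N ^ 2) by (unfold Rdiv; apply Rmult_le_pos; [apply pow2_ge_0| left; apply Rinv_0_lt_compat, pow_lt; lra]).
      assert (Hn N ^ 2 / INR N ^ 2 * INR (N - 1) <= Hn N ^ 2 / INR N ^ 2 * INR N) by (apply Rmult_le_compat_l; lra).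
      assert (Hn N ^ 2 / INR N ^ 2 * INR N = Hn N ^ 2 / INR N) by (field; lra).
      assert (2 * Hn N / INR N * Hn N = 2 * (Hn N ^ 2 / INR N)) by (field; lra).
      unfold Rdiv in *. lra. Qed.

Lemma ln_le' x y : 0 < x -> x <= y -> ln x <= ln y.
Proof. intros Hx Hxy. destruct (Rle_lt_or_eq_dec _ _ Hxy). left; apply ln_increasing; auto. subst; lra. Qed.

Lemma ln_step n : 1 <= n -> / (n + 1) <= ln (n + 1) - ln n.
Proof. intros Hn0. pose proof (exp_ineq1_le (- / (n + 1))).
  assert (E : 1 + - / (n + 1) = n * / (n + 1)) by (field; lra).
  rewrite E in H. assert (0 < n * / (n + 1)) by (apply Rmult_lt_0_compat; [lra| apply Rinv_0_lt_compat; lra]).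
  apply ln_le' in H; auto. rewrite ln_exp in H. rewrite ln_mult in H by (try lra; apply Rinv_0_lt_compat; lra).
  rewrite ln_Rinv in H by lra. lra. Qed.

Lemma Hn_ln_aux N : (1 <= N)%nat -> Hn (S N) <= 1 + ln (INR N).
Proof. intros H. induction H.
  - unfold Hn. rewrite (sm_succ 1) by lia. rewrite sm_1. simpl. rewrite ln_1. lra.
  - rewrite Hn_succ by lia. rewrite S_INR.
    assert (1 <= INR m) by (apply (le_INR 1); lia). pose proof (ln_step (INR m) H0).
    lra. Qed.

Lemma Hn_ln N : (1 <= N)%nat -> Hn N <= 1 + ln (INR N).
Proof. intros H. destruct N; [lia|]. destruct N.
  - unfold Hn. rewrite sm_1. simpl. rewrite ln_1. lra.
  - pose proof (Hn_ln_aux (S N) ltac:(lia)).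
    assert (ln (INR (S N)) <= ln (INR (S (S N)))) by (apply ln_le'; [apply INR_pos; lia| apply le_INR; lia]). lra. Qed.

Lemma ln_r x : 1 <= x -> ln x <= 4 * sqrt (sqrt x).
Proof. intros Hx. set (r := sqrt (sqrt x)).
  assert (Hs : 1 <= sqrt x) by (rewrite <- sqrt_1; apply sqrt_le_1_alt; lra).
  assert (Hr : 1 <= r) by (unfold r; rewrite <- sqrt_1; apply sqrt_le_1_alt; lra).
  assert (E : r ^ 4 = x).
  { unfold r. replace 4%nat with (2 * 2)%nat by reflexivity. rewrite pow_mult. rewrite pow2_sqrt by lra.
    rewrite pow2_sqrt; lra. }
  rewrite <- E. rewrite ln_pow by lra. pose proof (exp_ineq1_le (ln r)). rewrite exp_ln in H by lra.
  simpl INR. lra. Qed.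

Lemma Hn_sq_bnd N : (1 <= N)%nat -> Hn N ^ 2 <= 25 * sqrt (INR N).
Proof. intros H. assert (Hx : 1 <= INR N) by (apply (le_INR 1); lia).
  pose proof (Hn_ln N H). pose proof (ln_r _ Hx). pose proof (Hn_nonneg N).
  assert (Hs : 1 <= sqrt (INR N)) by (rewrite <- sqrt_1; apply sqrt_le_1_alt; lra).
  assert (Hr : 1 <= sqrt (sqrt (INR N))) by (rewrite <- sqrt_1; apply sqrt_le_1_alt; lra).
  assert (Hn N <= 5 * sqrt (sqrt (INR N))) by lra.
  assert (E : sqrt (sqrt (INR N)) ^ 2 = sqrt (INR N)) by (apply pow2_sqrt; lra).
  rewrite <- E. assert (Hn N ^ 2 <= (5 * sqrt (sqrt (INR N))) ^ 2) by (apply pow_incr; lra).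
  lra. Qed.

Lemma Err_lim u : (2 <= u)%nat -> is_lim_seq (Err u) 0.
Proof. intros Hu.
  assert (Hs : is_lim_seq (fun n => sqrt (INR n)) p_infty).
  { unfold is_lim_seq. eapply filterlim_comp. apply is_lim_seq_INR. apply filterlim_sqrt_p. }
  assert (Hi : is_lim_seq (fun n => 150 * / sqrt (INR n)) 0).
  { replace (Finite 0) with (Rbar_mult 150 (Rbar_inv p_infty)) by (simpl; f_equal; ring).
    apply is_lim_seq_scal_l. apply is_lim_seq_inv; auto. discriminate. }
  apply is_lim_seq_le_le with (u := fun _ => 0) (w := fun n => 150 * / sqrt (INR n)); [|apply is_lim_seq_const|auto].
  intros N. destruct N.
  - unfold Err. rewrite sm_0. simpl. rewrite sqrt_0, Rinv_0. lra.
  - destruct (Err_bnd u (S N) Hu ltac:(lia)). split; auto.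
    pose proof (Hn_sq_bnd (S N) ltac:(lia)).
    assert (Hx : 1 <= INR (S N)) by (apply (le_INR 1); lia).
    assert (Hs1 : 1 <= sqrt (INR (S N))) by (rewrite <- sqrt_1; apply sqrt_le_1_alt; lra).
    assert (E : sqrt (INR (S N)) * sqrt (INR (S N)) = INR (S N)) by (apply sqrt_sqrt; lra).
    assert (6 * Hn (S N) ^ 2 / INR (S N) <= 6 * (25 * sqrt (INR (S N))) / INR (S N)).
    { unfold Rdiv. apply Rmult_le_compat_r. left; apply Rinv_0_lt_compat; lra. lra. }
    assert (6 * (25 * sqrt (INR (S N))) / INR (S N) = 150 * / sqrt (INR (S N))).
    { set (s := sqrt (INR (S N))) in *. rewrite <- E. field. lra. }
    lra. Qed.

Lemma pow_m1 k : (-1) ^ k = ie k - io k.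
Proof. induction k. - unfold ie, io. simpl. ring.
  - simpl pow. rewrite IHk. unfold ie, io. rewrite Nat.odd_succ, <- Nat.negb_odd.
    destruct (Nat.odd k); simpl; ring. Qed.

Lemma ie_io k : ie k = 1 - io k.
Proof. unfold ie, io. destruct (Nat.odd k); ring. Qed.

Lemma e3_diff m : esum_trunc m ((1%nat, true) :: nil) - esum_trunc m ((1%nat, false) :: nil) = -2 * Oh m.
Proof. change (sm m (fun k => sgn true k / INR k ^ 1 * 1) - sm m (fun k => sgn false k / INR k ^ 1 * 1) = -2 * Oh m).
  rewrite <- sm_minus. unfold Oh. rewrite <- sm_scal. apply sm_ext. intros k Hk.
  assert (0 < INR k) by (apply INR_pos; lia).
  unfold sgn. rewrite pow_m1, ie_io. field. lra. Qed.

Lemma e2_diffA n : esum_trunc n ((1%nat, true) :: (1%nat, true) :: nil) - esum_trunc n ((1%nat, true) :: (1%nat, false) :: nil)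
  = sm n (fun m => (-1) ^ m / INR m * (-2 * Oh m)).
Proof. change (sm n (fun m => sgn true m / INR m ^ 1 * esum_trunc m ((1%nat, true) :: nil))
   - sm n (fun m => sgn true m / INR m ^ 1 * esum_trunc m ((1%nat, false) :: nil)) = sm n (fun m => (-1) ^ m / INR m * (-2 * Oh m))).
  rewrite <- sm_minus. apply sm_ext. intros m Hm. rewrite <- e3_diff. unfold sgn. simpl pow. rewrite Rmult_1_r. ring. Qed.

Lemma e2_diffB n : esum_trunc n ((1%nat, false) :: (1%nat, false) :: nil) - esum_trunc n ((1%nat, false) :: (1%nat, true) :: nil)
  = sm n (fun m => 1 / INR m * (2 * Oh m)).
Proof. change (sm n (fun m => sgn false m / INR m ^ 1 * esum_trunc m ((1%nat, false) :: nil))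
   - sm n (fun m => sgn false m / INR m ^ 1 * esum_trunc m ((1%nat, true) :: nil)) = sm n (fun m => 1 / INR m * (2 * Oh m))).
  rewrite <- sm_minus. apply sm_ext. intros m Hm.
  replace (2 * Oh m) with (-1 * (-2 * Oh m)) by ring. rewrite <- e3_diff. unfold sgn. simpl pow. rewrite Rmult_1_r. ring. Qed.

Lemma esum_comb u N :
  esum_trunc N ((u, false) :: (1%nat, true) :: (1%nat, true) :: nil)
  + esum_trunc N ((u, true) :: (1%nat, false) :: (1%nat, false) :: nil)
  - esum_trunc N ((u, true) :: (1%nat, false) :: (1%nat, true) :: nil)
  - esum_trunc N ((u, false) :: (1%nat, true) :: (1%nat, false) :: nil) = 4 * (P1 u N - P2 u N).
Proof.
  change (sm N (fun n => sgn false n / INR n ^ u * esum_trunc n ((1%nat, true) :: (1%nat, true) :: nil))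
   + sm N (fun n => sgn true n / INR n ^ u * esum_trunc n ((1%nat, false) :: (1%nat, false) :: nil))
   - sm N (fun n => sgn true n / INR n ^ u * esum_trunc n ((1%nat, false) :: (1%nat, true) :: nil))
   - sm N (fun n => sgn false n / INR n ^ u * esum_trunc n ((1%nat, true) :: (1%nat, false) :: nil)) = 4 * (P1 u N - P2 u N)).
  rewrite <- sm_plus, <- sm_minus, <- sm_minus. unfold P1, P2. rewrite <- sm_minus, <- sm_scal.
  apply sm_ext. intros n Hn1. cbv beta.
  pose proof (e2_diffA n) as A. pose proof (e2_diffB n) as B.
  set (X1 := esum_trunc n ((1%nat, true) :: (1%nat, true) :: nil)) in *.
  set (X4 := esum_trunc n ((1%nat, true) :: (1%nat, false) :: nil)) in *.
  set (X2 := esum_trunc n ((1%nat, false) :: (1%nat, false) :: nil)) in *.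
  set (X3 := esum_trunc n ((1%nat, false) :: (1%nat, true) :: nil)) in *.
  replace X1 with (X4 + sm n (fun m => (-1) ^ m / INR m * (-2 * Oh m))) by lra.
  replace X2 with (X3 + sm n (fun m => 1 / INR m * (2 * Oh m))) by lra.
  unfold sgn.
  assert (E : sm n (fun m => (-1) ^ m / INR m * (-2 * Oh m)) + (-1) ^ n * sm n (fun m => 1 / INR m * (2 * Oh m))
     = 4 * (ie n * sm n (fun k => io k / INR k * Oh k) - io n * sm n (fun k => ie k / INR k * Oh k))).
  { rewrite <- !sm_scal, <- sm_plus, <- sm_minus, <- sm_scal. apply sm_ext. intros m Hm.
    rewrite !pow_m1, !ie_io. unfold Rdiv. ring. }
  set (S1 := sm n (fun k => io k / INR k * Oh k)) in *.
  set (S2 := sm n (fun k => ie k / INR k * Oh k)) in *.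
  set (SA := sm n (fun m => (-1) ^ m / INR m * (-2 * Oh m))) in *.
  set (SB := sm n (fun m => 1 / INR m * (2 * Oh m))) in *.
  match goal with |- ?L = ?R => replace L with (R + / INR n ^ u * (SA + (-1) ^ n * SB - 4 * (ie n * S1 - io n * S2))) by (unfold Rdiv; ring) end.
  rewrite E. ring. Qed.

Lemma T1_eq m : T_trunc m (1%nat :: nil) = Oh m.
Proof. change (sm m (fun k => if Bool.eqb (Nat.odd k) (Nat.odd 1) then / (INR k ^ 1) * 1 else 0) = Oh m).
  unfold Oh. apply sm_ext. intros k Hk. unfold io. simpl Nat.odd.
  destruct (Nat.odd k); simpl; rewrite ?Rmult_1_r; unfold Rdiv; ring. Qed.

Lemma T3_eq N a b : T_trunc N (a :: b :: 1%nat :: nil) =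
  sm N (fun m => io m * (/ INR m ^ a * sm m (fun m2 => ie m2 * (/ INR m2 ^ b * Oh m2)))).
Proof. change (sm N (fun m => if Bool.eqb (Nat.odd m) (Nat.odd 3) then / (INR m ^ a) *
   sm m (fun m2 => if Bool.eqb (Nat.odd m2) (Nat.odd 2) then / (INR m2 ^ b) * T_trunc m2 (1%nat :: nil) else 0) else 0) =
  sm N (fun m => io m * (/ INR m ^ a * sm m (fun m2 => ie m2 * (/ INR m2 ^ b * Oh m2))))).
  apply sm_ext. intros m Hm. replace (Nat.odd 3) with true by reflexivity.
  destruct (Nat.odd m) eqn:Em; unfold io; rewrite Em; cbn [Bool.eqb]; [|ring].
  rewrite Rmult_1_l. f_equal. apply sm_ext. intros k Hk. rewrite T1_eq. unfold ie. replace (Nat.odd 2) with false by reflexivity.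
  destruct (Nat.odd k); cbn [Bool.eqb]; ring. Qed.

Lemma Qt_eq u N : T_trunc N (u :: 2%nat :: nil) = Qt u N.
Proof. change (sm N (fun m => if Bool.eqb (Nat.odd m) (Nat.odd 2) then / (INR m ^ u) *
   sm m (fun k => if Bool.eqb (Nat.odd k) (Nat.odd 1) then / (INR k ^ 2) * 1 else 0) else 0) = Qt u N).
  unfold Qt. apply sm_ext. intros m Hm. replace (Nat.odd 2) with false by reflexivity. replace (Nat.odd 1) with true by reflexivity.
  unfold ie. destruct (Nat.odd m); cbn [Bool.eqb]; unfold Rdiv; [ring|].
  rewrite Rmult_1_l. f_equal. apply sm_ext. intros k Hk. unfold io. destruct (Nat.odd k); cbn [Bool.eqb]; ring. Qed.

Lemma lsum_lim (l : list nat) (f : nat -> nat -> R) (g : nat -> R) :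
  (forall a, In a l -> is_lim_seq (fun N => f a N) (g a)) ->
  is_lim_seq (fun N => lsum l (fun a => f a N)) (lsum l g).
Proof. induction l; intros H.
  - apply is_lim_seq_const.
  - rewrite lsum_cons. apply is_lim_seq_ext with (u := fun N => f a N + lsum l (fun a => f a N)).
    { intros; reflexivity. }
    apply is_lim_seq_plus'. apply H; now left. apply IHl. intros; apply H; now right. Qed.

Lemma lim_uniq (v : nat -> R) (x y : R) : is_lim_seq v x -> is_lim_seq v y -> x = y.
Proof. intros H1 H2. apply is_lim_seq_unique in H1. apply is_lim_seq_unique in H2.
  rewrite H1 in H2. now injection H2. Qed.

Lemma real_lim (v : nat -> R) (x : R) : is_lim_seq v x -> real (Lim_seq v) = x.
Proof. intros H. now rewrite (is_lim_seq_unique _ _ H). Qed.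

Lemma scal_lim (v : nat -> R) (a l : R) : is_lim_seq v l -> is_lim_seq (fun n => a * v n) (a * l).
Proof. intros H. exact (is_lim_seq_scal_l v a l H). Qed.

Lemma Lt_eq w u N : (4 <= w)%nat -> u = (w - 2)%nat ->
  lsum (seq 2 (w - 3)) (fun a => T_trunc N (a :: (w - 1 - a)%nat :: 1%nat :: nil)) = Lt u N.
Proof. intros hw Eu. set (l := seq 2 (w - 3)).
  rewrite (lsum_ext_in l _ (fun a => sm N (fun m => io m * (/ INR m ^ a * sm m (fun m2 => ie m2 * (/ INR m2 ^ (w - 1 - a) * Oh m2))))))
    by (intros; apply T3_eq).
  rewrite (sm_comm N l (fun a m => io m * (/ INR m ^ a * sm m (fun m2 => ie m2 * (/ INR m2 ^ (w - 1 - a) * Oh m2))))).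
  unfold Lt. apply sm_ext. intros m Hm.
  rewrite lsum_scal. f_equal.
  rewrite (lsum_ext_in l _ (fun a => sm m (fun m2 => / INR m ^ a * (ie m2 * (/ INR m2 ^ (w - 1 - a) * Oh m2)))))
    by (intros; symmetry; apply sm_scal).
  rewrite (sm_comm m l (fun a m2 => / INR m ^ a * (ie m2 * (/ INR m2 ^ (w - 1 - a) * Oh m2)))).
  apply sm_ext. intros m2 Hm2. unfold Fs.
  replace (u - 1)%nat with (w - 3)%nat by lia. fold l.
  rewrite <- lsum_scal. apply lsum_ext_in. intros a Ha. unfold l in Ha. apply in_seq in Ha.
  replace (u + 1 - a)%nat with (w - 1 - a)%nat by lia. ring. Qed.

Theorem corollary5p3 (w : nat) (hw : (4 <= w)%nat) :
  let u := (w - 2)%nat in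
  lsum (seq 2 (w - 3)) (fun a => Tval (a :: (w - 1 - a)%nat :: 1%nat :: nil))
  = 2 * Tval (u :: 2%nat :: nil)
    + 4 * ( esum ((u, false) :: (1%nat, true) :: (1%nat, true) :: nil)
          + esum ((u, true) :: (1%nat, false) :: (1%nat, false) :: nil)
          - esum ((u, true) :: (1%nat, false) :: (1%nat, true) :: nil)
          - esum ((u, false) :: (1%nat, true) :: (1%nat, false) :: nil)).
Proof.
  intros u. assert (Eu : u = (w - 2)%nat) by reflexivity. clearbody u.
  assert (Hu : (2 <= u)%nat) by lia.
  destruct (conv_P1 u Hu) as [lP1 HP1]. destruct (conv_P2 u Hu) as [lP2 HP2]. destruct (conv_Qt u Hu) as [lQ HQ].
  pose proof (Err_lim u Hu) as HE.
  set (l := seq 2 (w - 3)).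
  assert (Hla : forall a, In a l -> is_lim_seq (fun N => T_trunc N (a :: (w - 1 - a)%nat :: 1%nat :: nil))
      (real (Lim_seq (fun N => T_trunc N (a :: (w - 1 - a)%nat :: 1%nat :: nil))))).
  { intros a Ha. unfold l in Ha. apply in_seq in Ha. destruct (conv_T a (w - 1 - a) ltac:(lia) ltac:(lia)) as [la Hl].
    rewrite (real_lim _ _ Hl). exact Hl. }
  pose proof (lsum_lim l _ _ Hla) as HL.
  assert (HL2 : is_lim_seq (fun N => lsum l (fun a => T_trunc N (a :: (w - 1 - a)%nat :: 1%nat :: nil)))
                  (2 * lP1 + lQ - 2 * lP2 - 0)).
  { apply is_lim_seq_ext with (u := fun N => 2 * P1 u N + Qt u N - 2 * P2 u N - Err u N).
    { intros N. unfold l. rewrite (Lt_eq w u N hw Eu). symmetry. apply decomp. auto. }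
    apply is_lim_seq_minus'; auto. apply is_lim_seq_minus'; [|apply scal_lim; auto].
    apply is_lim_seq_plus'; [apply scal_lim; auto| auto]. }
  pose proof (lim_uniq _ _ _ HL HL2) as EL.
  destruct (conv_esum u false true true Hu) as [e1 He1].
  destruct (conv_esum u true false false Hu) as [e2 He2].
  destruct (conv_esum u true false true Hu) as [e3 He3].
  destruct (conv_esum u false true false Hu) as [e4 He4].
  assert (Ecomb : e1 + e2 - e3 - e4 = 4 * (lP1 - lP2)).
  { eapply lim_uniq.
    - apply is_lim_seq_minus'; [apply is_lim_seq_minus'; [apply is_lim_seq_plus'|]|]; eauto.
    - eapply is_lim_seq_ext. { intros N. symmetry. apply esum_comb. }
      apply scal_lim. apply is_lim_seq_minus'; auto. }
  assert (EQ : real (Lim_seq (fun N => T_trunc N (u :: 2%nat :: nil))) = lQ).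
  { apply real_lim. eapply is_lim_seq_ext; [|exact HQ]. intros N. symmetry. apply Qt_eq. }
  unfold Tval, esum. cbn [length].
  rewrite (real_lim _ _ He1), (real_lim _ _ He2), (real_lim _ _ He3), (real_lim _ _ He4), EQ.
  rewrite (lsum_scal l (2 ^ 3) (fun a => real (Lim_seq (fun N => T_trunc N (a :: (w - 1 - a)%nat :: 1%nat :: nil))))).
  rewrite EL. simpl. lra.
Qed.
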